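(* Let $(\theta, \tau) \in \mathbb{T} \times \mathbb{R}$, and define the maps $R_{\theta, \tau}(x, \omega) := (x + \theta, \omega + \tau)$ on $\mathbb{T}\times\mathbb{R}$ and $t_\tau(\omega) := \omega + \tau$ on $\mathbb{R}$ (addition on the torus is mod $2\pi$). Let $(\mu_t)_{t\ge 0}$ be a solution of the MFG problem with intrinsic frequency distribution $g$, and set $\tilde{\mu}_t := (R_{\theta + \tau t, \tau})_{\#} \mu_t$ and $\tilde{g} := (t_\tau)_{\#} g$ (push-forward measures). Then $(\tilde{\mu}_t)_{t \ge 0}$ is a solution of the MFG problem with intrinsic frequency distribution $\tilde{g}$.
   Context: $\mathbb{T} = \mathbb{R}/(2\pi\mathbb{Z})$. $g \in \mathcal{P}(\mathbb{R})$ has finite first moment. For $x\in\mathbb{T}$ and $\mu\in\mathcal{P}(\mathbb{T}\times\mathbb{R})$, $c(x,\mu) := \int 2\sin^2(\frac{x-y}{2})\,\mu(\mathrm{d}y,\mathrm{d}\omega)$. On a filtered probability space with Brownian motion $B$, $\mathcal{A}$ denotes square-integrable progressively measurable real controls. Given a flow $(\mu_t)$ in $\mathcal{P}(\mathbb{T}\times\mathbb{R})$ with second marginal $g$, disintegrated as $\mu_t(\mathrm{d}x,\mathrm{d}\omega)=\mu_t^\omega(\mathrm{d}x)g(\mathrm{d}\omega)$, the cost for frequency $\omega$ is $J^{\omega,\mu}(\alpha) = \mathbb{E}\int_0^\infty e^{-\beta t}[\frac12\alpha_t^2 + \kappa c(X_t^{\omega,\alpha},\mu_t)]\mathrm{d}t$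 with $X^{\omega,\alpha}_t = X_0^\omega + \int_0^t\alpha_s\mathrm{d}s + \omega t + \sigma B_t$, $\mathcal{L}(X_0^\omega)=\mu_0^\omega$, $\kappa\ge0$, $\beta,\sigma>0$. $(\mu_t)$ is a solution of the MFG problem with intrinsic frequency distribution $g$ if: for all $t$ the second marginal of $\mu_t$ is $g$; and there is a Borel set $E$ with $g(E)=1$ such that for all $\omega\in E$ the disintegration holds and there exists $\alpha^\omega_*\in\mathcal{A}$ with $\inf_{\alpha\in\mathcal{A}} J^{\omega,\mu}(\alpha) = J^{\omega,\mu}(\alpha^\omega_* )$ and $\mathcal{L}(X_t^{\omega,\alpha^\omega_*}) = \mu_t^\omega$ for all $t\ge0$. *)

(* Defs.v *)
From HB Require Import structures.
From mathcomp Require Import all_boot all_order all_algebra.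
From mathcomp Require Import all_classical all_reals all_analysis measurable_realfun.
Set Implicit Arguments. Unset Strict Implicit. Unset Printing Implicit Defensive.
Import Order.TTheory GRing.Theory Num.Theory.
Import numFieldNormedType.Exports.
Local Open Scope classical_set_scope.
Local Open Scope ring_scope.

Section Defs.
Context {R : realType}.

(** The torus T = R/(2 pi Z) is represented by the fundamental domain [0, 2pi):
    [tmod x] is the representative of the class of x. *)
Definition tmod (x : R) : R := x - pi *+ 2 * (Num.floor (x / (pi *+ 2)))%:~R.

(** P(T x R): probability measures on R x R carried by [0,2pi) x R. *)
Definition torus_prob (m : probability (R * R)%type R) : Prop :=
  m [set p : R * R | 0 <= p.1 < pi *+ 2] = 1%E.

Definition Rrot (theta tau : R) (p : R * R) : R * R := (tmod (p.1 + theta), p.2 + tau).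
Definition ttr (tau : R) (w : R) : R := w + tau.

Definition finite_first_moment (g : probability R R) : Prop :=
  (\int[g]_w (`|w|)%:E < +oo)%E.

Definition cKur (x : R) (m : probability (R * R)%type R) : R :=
  \int[m]_p (2 * (sin ((x - p.1) / 2)) ^+ 2).

Context {d : measure_display} {Omega : measurableType d}.

Definition filtration (F : R -> set (set Omega)) : Prop :=
  (forall t, sigma_algebra setT (F t)) /\
  (forall t, F t `<=` measurable) /\
  (forall s t, s <= t -> F s `<=` F t).

Definition brownian_motion (P : probability Omega R) (F : R -> set (set Omega))
    (B : R -> Omega -> R) : Prop :=
  (forall o, B 0 o = 0) /\
  (forall o, {within [set t | 0 <= t], continuous (fun t => B t o)}) /\
  (forall t C, 0 <= t -> measurable C -> F t (B t @^-1` C)) /\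
  (forall s t, 0 <= s < t -> forall C, measurable C ->
     P [set o | B t o - B s o \in C] = normal_prob 0 (Num.sqrt (t - s)) C) /\
  (forall s t, 0 <= s < t -> forall G C, F s G -> measurable C ->
     P (G `&` [set o | (B t o - B s o)%R \in C]) =
     (P G * P [set o | (B t o - B s o)%R \in C])%E).

Definition prog_measurable (F : R -> set (set Omega)) (a : R -> Omega -> R) : Prop :=
  forall t, 0 <= t -> forall C : set R, measurable C ->
    <<s [set A `*` G | A in [set A : set R | measurable A /\ A `<=` `[0%R, t]%classic]
                     & G in F t] >>
      [set p : R * Omega | 0 <= p.1 <= t /\ a p.1 p.2 \in C].

Definition admissible (P : probability Omega R) (F : R -> set (set Omega))
    (a : R -> Omega -> R) : Prop :=
  prog_measurable F a /\
  forall T, 0 <= T ->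
    (\int[P]_o \int[lebesgue_measure]_(s in `[0%R, T]%classic) ((a s o) ^+ 2)%:E < +oo)%E.

Definition state (sigma : R) (B : R -> Omega -> R) (X0 : Omega -> R) (w : R)
    (a : R -> Omega -> R) (t : R) (o : Omega) : R :=
  X0 o + Rintegral lebesgue_measure `[0%R, t]%classic (fun s => a s o) + w * t + sigma * B t o.

Definition cost (P : probability Omega R) (beta kappa sigma : R) (B : R -> Omega -> R)
    (mu : R -> probability (R * R)%type R) (X0 : Omega -> R) (w : R)
    (a : R -> Omega -> R) : \bar R :=
  (\int[P]_o \int[lebesgue_measure]_(t in [set t : R | (0 <= t)%R])
     ((expR (- (beta * t)) *
        (2^-1 * (a t o) ^+ 2 + kappa * cKur (state sigma B X0 w a t o) (mu t)))%R)%:E)%E.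

Definition MFG_solution (P : probability Omega R) (F : R -> set (set Omega))
    (B : R -> Omega -> R) (beta kappa sigma : R)
    (g : probability R R) (mu : R -> probability (R * R)%type R) : Prop :=
  (forall t, 0 <= t -> torus_prob (mu t)) /\
  (forall t, 0 <= t -> forall C, measurable C -> mu t (snd @^-1` C) = g C) /\
  exists E : set R, measurable E /\ g E = 1%E /\
  exists nu : R -> R -> probability R R,
    (* disintegration mu_t(dx,dw) = mu_t^w(dx) g(dw) *)
    (forall t, 0 <= t -> forall A, measurable A ->
       measurable_fun [set: R] ((fun w : R => nu t w A) : R -> \bar R)) /\
    (forall t, 0 <= t -> forall A : set (R * R), measurable A ->
       mu t A = (\int[g]_w nu t w [set x | A (x, w)])%E) /\
    forall w, E w ->
      (forall t, 0 <= t -> nu t w [set x | 0 <= x < pi *+ 2] = 1%E) /\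
      exists X0 : Omega -> R,
        (forall C, measurable C -> F 0 (X0 @^-1` C)) /\
        (forall C, measurable C -> P [set o | tmod (X0 o) \in C] = nu 0 w C) /\
        exists astar : R -> Omega -> R,
          admissible P F astar /\
          ereal_inf [set cost P beta kappa sigma B mu X0 w a | a in admissible P F]
            = cost P beta kappa sigma B mu X0 w astar /\
          forall t, 0 <= t -> forall C, measurable C ->
            P [set o | tmod (state sigma B X0 w astar t o) \in C] = nu t w C.

End Defs.

(* Main.v *)
Require Import Defs.
From HB Require Import structures.
From mathcomp Require Import all_boot all_order all_algebra.
From mathcomp Require Import all_classical all_reals all_analysis measurable_realfun.
From mathcomp Require Import ring lra.
Import Order.TTheory GRing.Theory Num.Theory.
Import numFieldNormedType.Exports.
Local Open Scope classical_set_scope.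
Local Open Scope ring_scope.

Section tmod_lemmas.
Context {R : realType}.

Lemma tp_gt0 : 0 < pi *+ 2 :> R.
Proof. by rewrite mulrn_wgt0 // pi_gt0. Qed.

Lemma tmod_range (x : R) : 0 <= tmod x < pi *+ 2.
Proof.
rewrite /tmod; have := floor_itv (x / (pi *+ 2)).
set k := Num.floor _ => /andP[h1 h2].
have tp0 := @tp_gt0.
rewrite ler_pdivlMr // in h1; rewrite ltr_pdivrMr // intrD in h2.
apply/andP; split; first by rewrite subr_ge0 mulrC.
rewrite ltrBlDl; move: h2; rewrite mulrDl mul1r => h2.
by rewrite mulrC.
Qed.

Lemma tmodDz (x : R) (k : int) : tmod (x + pi *+ 2 * k%:~R) = tmod x.
Proof.
rewrite /tmod.
have tp0 : pi *+ 2 != 0 :> R by rewrite gt_eqF // tp_gt0.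
have -> : (x + pi *+ 2 * k%:~R) / (pi *+ 2) = x / (pi *+ 2) + k%:~R.
  by rewrite mulrDl [pi *+ 2 * _]mulrC mulfK.
rewrite floorDrz ?intr_int // intrKfloor intrD; ring.
Qed.

Lemma tmod_tmod (x c : R) : tmod (tmod x + c) = tmod (x + c).
Proof.
have -> : tmod x + c = (x + c) + pi *+ 2 * (- Num.floor (x / (pi *+ 2)))%:~R.
  by rewrite /tmod intrN; ring.
exact: tmodDz.
Qed.

Lemma mpre d d' (T : measurableType d) (U : measurableType d') (f : T -> U) (A : set U) :
  measurable_fun setT f -> measurable A -> measurable (f @^-1` A).
Proof. by move=> mf mA; rewrite -[X in measurable X]setTI; exact: mf. Qed.

Lemma measurable_tmod : measurable_fun setT (@tmod R).
Proof.
rewrite /tmod; apply: measurable_funB => //.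
apply: nondecreasing_measurable => // x y xy.
by rewrite ler_pM2l ?tp_gt0 // ler_int le_floor // ler_pM2r // invr_gt0 tp_gt0.
Qed.

Lemma maddc d (T : measurableType d) (f : T -> R) (c : R) :
  measurable_fun setT f -> measurable_fun setT (fun x => f x + c).
Proof. by move=> mf; exact: (measurable_funD (f:=f) (g:=cst c) mf (measurable_cst _)). Qed.

Lemma measurable_tshift (c : R) : measurable_fun setT (fun x : R => tmod (x + c)).
Proof.
have h : measurable_fun setT (fun x : R => x + c) by apply: maddc.
exact: (measurableT_comp measurable_tmod h).
Qed.

Lemma measurable_Rrot (c tau : R) : measurable_fun setT (Rrot c tau).
Proof.
rewrite /Rrot; apply/measurable_fun_pairP; split; rewrite /comp /=.
  have h : measurable_fun setT (fun p : R * R => p.1 + c) by apply: maddc; exact: measurable_fst.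
  exact: (measurableT_comp measurable_tmod h).
by apply: maddc; exact: measurable_snd.
Qed.

Lemma sin2Dpiz (z : R) (k : int) : sin (z + pi * k%:~R) ^+ 2 = sin z ^+ 2.
Proof.
have pos : forall (y : R) (n : nat), sin (y + pi *+ n) ^+ 2 = sin y ^+ 2.
  move=> y n; rewrite (alternatingn (@sinDpi R)) exprMn -exprM mulnC exprM sqrrN expr1n expr1n mul1r//.
case: k => n.
  by rewrite (_ : (Posz n)%:~R = n%:R :> R) // mulr_natr pos.
rewrite NegzE intrN mulrN.
have -> : z = (z - pi * (n.+1)%:~R) + pi *+ n.+1.
  by rewrite mulr_natr subrK.
by rewrite pos mulr_natr addrK.
Qed.

End tmod_lemmas.
Arguments mpre {d d' T U f A}.

Section tpush.
Context {R : realType}.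
Variables (c : R) (m : probability R R).

Definition tpush : set R -> \bar R := fun A => m ((fun x => tmod (x + c)) @^-1` A).

Let tpush0 : tpush set0 = 0%E.
Proof. by rewrite /tpush preimage_set0 measure0. Qed.

Let tpush_ge0 A : (0 <= tpush A)%E.
Proof. exact: measure_ge0. Qed.

Let tpush_sigma_additive : semi_sigma_additive tpush.
Proof.
move=> F mF tF mUF; rewrite /tpush preimage_bigcup.
apply: measure_semi_sigma_additive.
- by move=> n; apply: mpre => //; exact: measurable_tshift.
- apply/trivIsetP => /= i j _ _ ij; rewrite -preimage_setI.
  by move/trivIsetP : tF => /(_ _ _ _ _ ij) ->//; rewrite preimage_set0.
- by rewrite -preimage_bigcup; apply: mpre => //; exact: measurable_tshift.
Qed.

HB.instance Definition _ := isMeasure.Build _ _ _ tpush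
  tpush0 tpush_ge0 tpush_sigma_additive.

Let tpush_setT : tpush setT = 1%E.
Proof. by rewrite /tpush preimage_setT probability_setT. Qed.

HB.instance Definition _ := Measure_isProbability.Build _ _ _ tpush tpush_setT.

End tpush.

Section knu.
Context {R : realType}.
Variable nu : R -> probability R R.

Definition knu (mnu : forall U, measurable U -> measurable_fun setT (nu ^~ U)) :
  R -> {measure set R -> \bar R} := fun w => nu w.

Hypothesis mnu : forall U, measurable U -> measurable_fun setT (nu ^~ U).

HB.instance Definition _ := isKernel.Build _ _ _ _ _ (knu mnu) mnu.

Let knu_prob x : knu mnu x [set: R] = 1%E.
Proof. exact: probability_setT. Qed.

HB.instance Definition _ := Kernel_isProbability.Build _ _ _ _ _ (knu mnu) knu_prob.

Lemma knu_xsection (A : set (R * R)) : measurable A ->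
  measurable_fun setT (fun w => nu w [set x | A (w, x)]).
Proof.
move=> mA.
have := @measurable_fun_xsection_finite_kernel _ _ _ _ _ (knu mnu) A.
rewrite inE => /(_ mA).
by congr measurable_fun; apply/funext => w; rewrite xsectionE.
Qed.

End knu.

Section ckur.
Context {R : realType}.

Lemma cKur_shift (m m' : probability (R * R)%type R) (c tau x : R) :
  (forall A, measurable A -> m' A = m (Rrot c tau @^-1` A)) ->
  cKur (x + c) m' = cKur x m.
Proof.
move=> hm; rewrite /cKur /Rintegral; congr fine.
set f := fun p : R * R => (2 * sin ((x + c - p.1) / 2) ^+ 2)%:E.
have mf : measurable_fun setT f.
  apply/measurable_EFinP.
  have ma : measurable_fun setT (fun p : R * R => (x + c - p.1) / 2).
    have m1 : measurable_fun setT (fun p : R * R => x + c - p.1).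
      have := @measurable_funB _ (R * R)%type R setT (cst (x + c)) fst (measurable_cst _) measurable_fst.
      by [].
    have := @measurable_funM _ (R * R)%type R setT _ (cst 2^-1) m1 (measurable_cst _).
    by [].
  have ms : measurable_fun setT (@sin R) := continuous_measurable_fun (@continuous_sin R).
  have h := measurableT_comp ms ma.
  have h2 := measurable_funX 2 h.
  exact: (measurable_funM (f := cst 2) _ h2).
have f0 : forall p, (0 <= f p)%E.
  by move=> p; rewrite /f lee_fin mulr_ge0 // sqr_ge0.
have H := ge0_integral_pushforward (measurable_Rrot c tau) m measurableT mf
  (fun p _ => f0 p).
rewrite preimage_setT in H.
transitivity (\int[m]_(p in setT) (f \o Rrot c tau) p)%E.
  rewrite -H.
  refine (eq_measure_integral _ _).
  by move=> A mA _; exact: hm.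
congr (integral _ _ _); apply/funext => p; rewrite /f /comp /Rrot /=; congr (_%:E); congr (2 * _).
have -> : (x + c - tmod (p.1 + c)) / 2 =
   (x - p.1) / 2 + pi * (Num.floor ((p.1 + c) / (pi *+ 2)))%:~R.
  by rewrite /tmod; field.
exact: sin2Dpiz.
Unshelve. all: exact: measurable_Rrot.
Qed.

End ckur.

Section intshift.
Context {R : realType}.

Lemma int_shift (g gt : probability R R) (tau : R) (h : R -> \bar R) :
  (forall C, measurable C -> gt C = g (ttr tau @^-1` C)) ->
  measurable_fun setT h -> (forall w, (0 <= h w)%E) ->
  (\int[gt]_w h w = \int[g]_w h (w + tau)%R)%E.
Proof.
move=> hg mh h0.
have mt : measurable_fun setT (ttr tau).
  by rewrite /ttr; apply: maddc.
have H := ge0_integral_pushforward mt g measurableT mh (fun p _ => h0 p).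
rewrite preimage_setT in H.
transitivity (\int[g]_(p in setT) (h \o ttr tau) p)%E.
  rewrite -H.
  refine (eq_measure_integral _ _).
  by move=> A mA _; exact: hg.
by [].
Unshelve. all: exact: mt.
Qed.

End intshift.

Theorem lemma2p2 (R : realType) (d : measure_display) (Omega : measurableType d)
  (P : probability Omega R) (F : R -> set (set Omega)) (B : R -> Omega -> R)
  (beta kappa sigma : R)
  (g : probability R R) (mu : R -> probability (R * R)%type R)
  (theta tau : R)
  (gt : probability R R) (mut : R -> probability (R * R)%type R) :
  filtration F -> brownian_motion P F B ->
  0 <= kappa -> 0 < beta -> 0 < sigma ->
  finite_first_moment g ->
  MFG_solution P F B beta kappa sigma g mu ->
  (forall C : set R, measurable C -> gt C = g (ttr tau @^-1` C)) ->
  (forall t, 0 <= t -> forall A : set (R * R), measurable A ->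
     mut t A = mu t (Rrot (theta + tau * t) tau @^-1` A)) ->
  MFG_solution P F B beta kappa sigma gt mut.
Proof.
move=> hF hB hk hb hs hg [hT [hM [E [mE [gE1 [nu [mnu [hdis hE]]]]]]]] hgt hmut.
have mttr : measurable_fun setT (ttr tau) by rewrite /ttr; apply: maddc.
have mmin : measurable_fun setT (fun w : R => w - tau) by apply: maddc.
split.
  move=> t t0; rewrite /torus_prob hmut //; last first.
    have -> : [set p : R * R | 0 <= p.1 < pi *+ 2] = fst @^-1` `[0, pi *+ 2[%classic.
      by apply/funext => p /=; rewrite in_itv.
    by apply: mpre => //; exact: measurable_fst.
  have -> : Rrot (theta + tau * t) tau @^-1` [set p | 0 <= p.1 < pi *+ 2] = setT.
    by apply/seteqP; split => p //= _; exact: tmod_range.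
  exact: probability_setT.
split.
  move=> t t0 C mC; rewrite hmut //; last by apply: mpre => //; exact: measurable_snd.
  rewrite hgt //.
  have -> : Rrot (theta + tau * t) tau @^-1` (snd @^-1` C) = snd @^-1` (ttr tau @^-1` C) by [].
  by apply: hM => //; exact: mpre.
exists [set w | E (w - tau)]; split; first exact: mpre.
split.
  rewrite hgt; last exact: mpre.
  have -> : ttr tau @^-1` [set w | E (w - tau)] = E.
    by apply/funext => w; rewrite /ttr /preimage /= addrK.
  exact: gE1.
exists (fun t w => tpush (theta + tau * t) (nu t (w - tau))).
split.
  move=> t t0 A mA /=.
  have := measurableT_comp (mnu t t0 _ (mpre (measurable_tshift (theta + tau * t)) mA)) mmin.
  by [].
split.
  move=> t t0 A mA; rewrite hmut // (hdis t t0 _ (mpre (measurable_Rrot _ _) mA)).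
  set c := theta + tau * t.
  have mnu' : forall U, measurable U -> measurable_fun setT ((fun w => nu t (w - tau)) ^~ U).
    by move=> U mU; exact: (measurableT_comp (mnu t t0 _ mU) mmin).
  have mA2 : measurable [set p : R * R | A (tmod (p.2 + c), p.1)].
    apply: (mpre (f := fun p : R * R => (tmod (p.2 + c), p.1))) => //.
    apply/measurable_fun_pairP; split; rewrite /comp /=.
      have h : measurable_fun setT (fun p : R * R => p.2 + c) by apply: maddc; exact: measurable_snd.
      exact: (measurableT_comp measurable_tmod h).
    exact: measurable_fst.
  have mh := @knu_xsection R (fun w => nu t (w - tau)) mnu' _ mA2.
  rewrite (@int_shift R g gt tau _ hgt mh); last by move=> w; exact: measure_ge0.
  congr (integral _ _ _); apply/funext => w /=.
  by rewrite addrK.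
move=> w' Ew; split.
  move=> t t0 /=.
  rewrite /tpush.
  have -> : (fun x => tmod (x + (theta + tau * t))) @^-1` [set x | 0 <= x < pi *+ 2] = setT.
    by apply/seteqP; split => p //= _; exact: tmod_range.
  exact: probability_setT.
have [_ [X0 [hX0F [hX0law [astar [hadm [hinf hlaw]]]]]]] := hE _ Ew.
exists (fun o => X0 o + theta); split.
  move=> C mC.
  have -> : (fun o => X0 o + theta) @^-1` C = X0 @^-1` ((fun x => x + theta) @^-1` C) by [].
  by apply: hX0F; apply: mpre => //; exact: maddc.
split.
  move=> C mC /=; rewrite /tpush mulr0 addr0.
  rewrite -hX0law; last exact: (mpre (measurable_tshift theta) mC).
  congr (P _); apply/funext => o; rewrite /preimage /=.
  by rewrite [in RHS]inE /= tmod_tmod inE.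
exists astar; split; first exact: hadm.
have hstate : forall a t o, state sigma B (fun o => X0 o + theta) w' a t o =
    state sigma B X0 (w' - tau) a t o + (theta + tau * t).
  by move=> a t o; rewrite /state; ring.
have hcost : cost P beta kappa sigma B mut (fun o => X0 o + theta) w' =
             cost P beta kappa sigma B mu X0 (w' - tau).
  apply/funext => a; rewrite /cost; congr (integral _ _ _); apply/funext => o.
  apply: eq_integral => t; rewrite inE /= => t0.
  by rewrite hstate (@cKur_shift R (mu t) (mut t) _ _ _ (hmut t t0)).
split.
  rewrite hcost; exact: hinf.
move=> t t0 C mC /=; rewrite /tpush.
rewrite -(hlaw t t0 _ (mpre (measurable_tshift (theta + tau * t)) mC)).
congr (P _); apply/funext => o; rewrite /preimage /= hstate.
by rewrite [in RHS]inE /= tmod_tmod inE.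
Qed.
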